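(* Let $n\ge 3$, let $A=[a_{ij}]$ be a real $n\times n$ matrix with zero diagonal and let $f(\sigma)=\sum_{i=1}^{n-1}\sum_{j=i+1}^n a_{\sigma(i)\sigma(j)}$ be the LOP objective function on $\Sigma_n$. Then $\hat f_{(n-1,1)}=0$ if and only if $\sum_{j=1}^n(a_{ij}-a_{ji})=0$ for all $i=1,\dots,n$.
   Context: $\Sigma_n$ is the symmetric group on $\{1,\dots,n\}$; $\sigma(k)$ is the row/column index placed in position $k$. For a partition $\lambda$ of $n$, $\rho_\lambda$ is the irreducible representation of $\Sigma_n$ indexed by $\lambda$ and $\hat f_\lambda=\sum_{\sigma\in\Sigma_n}f(\sigma)\rho_\lambda(\sigma)$. *)

(* Defs.v *)
From HB Require Import structures.
From mathcomp Require Import all_boot all_order all_algebra all_fingroup.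
Set Implicit Arguments. Unset Strict Implicit. Unset Printing Implicit Defensive.
Import Order.TTheory GRing.Theory Num.Theory.
Local Open Scope ring_scope.

(* Positions and row/column indices are 0-based: {1..n} is 'I_n. *)

Definition permv (n : nat) (s : 'S_n) (k : nat) : nat :=
  if @insub nat (fun k => k < n)%N 'I_n k is Some x then val (s x) else k.

(* The irreducible representation rho_(n-1,1) (standard representation) of
   Sigma_n, realized on the sum-zero subspace of R^n with basis
   b_i = e_i - e_n (i = 1..n-1), where sigma acts by e_k |-> e_{sigma(k)}:
   sigma(b_j) = e_{sigma j} - e_{sigma n} = b_{sigma j} - b_{sigma n}
   (with b_n = 0). *)
Definition std_rep (R : ringType) (n : nat) (s : 'S_n) : 'M[R]_(n.-1) :=
  \matrix_(i, j) (((permv s j == i) : nat)%:R - ((permv s n.-1 == i) : nat)%:R).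

Definition lop_obj (R : ringType) (n : nat) (A : 'M[R]_n) (s : 'S_n) : R :=
  \sum_(i : 'I_n) \sum_(j : 'I_n | (i < j)%N) A (s i) (s j).

Definition fourier_std (R : ringType) (n : nat) (f : 'S_n -> R) : 'M[R]_(n.-1) :=
  \sum_(s : 'S_n) f s *: std_rep R s.

(* Main.v *)
Require Import Defs.
From HB Require Import structures.
From mathcomp Require Import all_boot all_order all_algebra all_fingroup.
From mathcomp Require Import ring lra zify.
Import Order.TTheory GRing.Theory Num.Theory.
Set Implicit Arguments. Unset Strict Implicit. Unset Printing Implicit Defensive.
Local Open Scope ring_scope.
Lemma permv_ord n (s : 'S_n) (x : 'I_n) : permv s x = s x.
Proof. by rewrite /permv valK. Qed.

Lemma std_rep_E (R : ringType) m (s : 'S_m.+2) (i j : 'I_m.+1) :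
  std_rep R s i j = ((s (widen_ord (leqnSn _) j) == widen_ord (leqnSn _) i) : nat)%:R
     - ((s ord_max == widen_ord (leqnSn _) i) : nat)%:R.
Proof.
rewrite /std_rep mxE (permv_ord s (widen_ord (leqnSn _) j)).
by rewrite (permv_ord s ord_max).
Qed.

Lemma lop_inv (R : ringType) n (A : 'M[R]_n) (t : 'S_n) :
  lop_obj A t^-1 = \sum_a \sum_b ((t a < t b)%N : nat)%:R * A a b.
Proof.
rewrite /lop_obj (reindex_inj (@perm_inj _ t)); apply: eq_bigr => a _.
rewrite big_mkcond (reindex_inj (@perm_inj _ t)); apply: eq_bigr => b _.
by rewrite !permK; case: ifP => _; rewrite ?mul1r ?mul0r.
Qed.

Definition Cnt n (k p a b : 'I_n) : nat :=
  \sum_(t : 'S_n) ((t k == p) && (t a < t b))%N.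
Definition Ecnt n (k p : 'I_n) : nat := \sum_(t : 'S_n) (t k == p).

Lemma Ecnt_indep n (k p q : 'I_n) : Ecnt k p = Ecnt k q.
Proof.
rewrite /Ecnt (reindex_inj (mulIg (tperm p q))); apply: eq_bigr => t _.
by rewrite permM (canF_eq (tpermK p q)) tpermL.
Qed.

Lemma Cnt_swap n (k p a b : 'I_n) : a != k -> b != k -> Cnt k p a b = Cnt k p b a.
Proof.
move=> ak bk; rewrite /Cnt (reindex_inj (mulgI (tperm a b))); apply: eq_bigr => t _.
by rewrite !permM tpermL tpermR tpermD // eq_sym.
Qed.

Lemma Cnt_bindep n (k p b c : 'I_n) : b != k -> c != k -> Cnt k p k b = Cnt k p k c.
Proof.
move=> bk ck; rewrite /Cnt (reindex_inj (mulgI (tperm b c))); apply: eq_bigr => t _.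
by rewrite !permM tpermL tpermD // eq_sym.
Qed.

Lemma Cnt_compl n (k p a b : 'I_n) : a != b -> (Cnt k p a b + Cnt k p b a = Ecnt k p)%N.
Proof.
move=> ab; rewrite /Cnt /Ecnt -big_split; apply: eq_bigr => t _ /=.
have : t a != t b by rewrite (inj_eq perm_inj).
case: (t k == p) => //=; case: ltngtP => // /val_inj ->; by rewrite eqxx.
Qed.

Lemma Cnt_last0 m (k b : 'I_m.+1) : Cnt k ord_max k b = 0%N.
Proof.
rewrite /Cnt big1 // => t _; case: eqP => //= ->.
by rewrite ltnNge -ltnS ltn_ord.
Qed.

Lemma Cnt_diag n (k p a : 'I_n) : Cnt k p a a = 0%N.
Proof. by rewrite /Cnt big1 // => t _; rewrite ltnn andbF. Qed.
Lemma T_E (R : comRingType) n (A : 'M[R]_n) (k p : 'I_n) :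
  \sum_(s : 'S_n) lop_obj A s * ((s p == k) : nat)%:R =
  \sum_a \sum_b A a b * (Cnt k p a b)%:R.
Proof.
rewrite (reindex_inj invg_inj) /=.
under eq_bigr => t _ do rewrite lop_inv (canF_eq (permKV t)) eq_sym mulr_suml.
rewrite exchange_big; apply: eq_bigr => a _.
under eq_bigr => t _ do rewrite mulr_suml.
rewrite exchange_big; apply: eq_bigr => b _.
rewrite /Cnt natr_sum mulr_sumr; apply: eq_bigr => t _.
rewrite -mulnb natrM; ring.
Qed.

Definition Nc m (k p : 'I_m.+2) : nat := Cnt k p k (lift k ord0).

Lemma term (R : comRingType) m (A : 'M[R]_m.+2) (k p a b : 'I_m.+2) :
  A a b * ((Cnt k p a b)%:R - (Cnt k ord_max a b)%:R) =
  (Nc k p)%:R * (((a == k) : nat)%:R * A a b - ((b == k) : nat)%:R * A a b).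
Proof.
have Ep := Ecnt_indep k p ord_max.
have k0 : lift k ord0 != k by rewrite eq_sym neq_lift.
case: (eqVneq a b) => [<-|ab]; first by rewrite !Cnt_diag; ring.
case: (eqVneq a k) => [ak|ak].
  rewrite {}ak in ab *; have bk : b != k by rewrite eq_sym.
  rewrite (negbTE bk) Cnt_last0 /Nc (Cnt_bindep p bk k0) /=; ring.
case: (eqVneq b k) => [bk|bk].
  rewrite {}bk in ab *; have h1 := Cnt_compl k p ab; have h2 := Cnt_compl k ord_max ab.
  have e1 : (Cnt k p a k)%:R = (Ecnt k ord_max)%:R - (Nc k p)%:R :> R.
    by rewrite -Ep -h1 /Nc (Cnt_bindep p ak k0) natrD addrK.
  have e2 : (Cnt k ord_max a k)%:R = (Ecnt k ord_max)%:R :> R.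
    by rewrite -h2 Cnt_last0 addn0.
  rewrite ?eqxx ?(negbTE ak) e1 e2 /=; ring.
have h1 := Cnt_compl k p ab; have h2 := Cnt_compl k ord_max ab.
rewrite (Cnt_swap p ak bk) in h1; rewrite (Cnt_swap ord_max ak bk) in h2.
have -> : Cnt k p a b = Cnt k ord_max a b.
  rewrite (Cnt_swap p ak bk) (Cnt_swap ord_max ak bk); lia.
rewrite ?(negbTE ak) ?(negbTE bk) /=; ring.
Qed.

Lemma sum_delta (R : comRingType) (I : finType) (k : I) (X : I -> R) :
  \sum_a ((a == k) : nat)%:R * X a = X k.
Proof.
rewrite (bigD1 k) //= eqxx mul1r big1 ?addr0 // => a /negbTE ->; by rewrite mul0r.
Qed.

Lemma D_E (R : comRingType) m (A : 'M[R]_m.+2) (k p : 'I_m.+2) :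
  \sum_(s : 'S_m.+2) lop_obj A s * ((s p == k) : nat)%:R -
  \sum_(s : 'S_m.+2) lop_obj A s * ((s ord_max == k) : nat)%:R =
  (Nc k p)%:R * (\sum_b A k b - \sum_a A a k).
Proof.
rewrite !T_E -sumrB.
under eq_bigr => a _ do rewrite -sumrB.
under eq_bigr => a _ do under eq_bigr => b _ do rewrite -mulrBr term.
under eq_bigr => a _ do rewrite -mulr_sumr sumrB.
rewrite -mulr_sumr sumrB; congr (_ * (_ - _)).
  under eq_bigr => a _ do rewrite -mulr_sumr.
  exact: sum_delta.
by apply: eq_bigr => a _; rewrite sum_delta.
Qed.

Lemma Nc_pos m (k : 'I_m.+2) : (0 < Nc k ord0)%N.
Proof.
rewrite /Nc /Cnt (bigD1 (tperm k ord0)) //= tpermL eqxx /=.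
have h : tperm k ord0 (lift k ord0) != tperm k ord0 k.
  by rewrite (inj_eq perm_inj) eq_sym neq_lift.
rewrite tpermL in h.
by rewrite addn_gt0 lt0b lt0n h.
Qed.

Theorem proposition3 (R : realFieldType) (n : nat) (A : 'M[R]_n) :
  (3 <= n)%N ->
  (forall i : 'I_n, A i i = 0) ->
  fourier_std (lop_obj A) = 0 <->
  (forall i : 'I_n, \sum_(j : 'I_n) (A i j - A j i) = 0).
Proof.
case: n A => [|[|m]] A // _ diag.
have F_E : forall i j : 'I_m.+1, fourier_std (lop_obj A) i j =
    (Nc (widen_ord (leqnSn _) i) (widen_ord (leqnSn _) j))%:R *
    (\sum_b A (widen_ord (leqnSn _) i) b - \sum_a A a (widen_ord (leqnSn _) i)).
  move=> i j; rewrite /fourier_std summxE.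
  under eq_bigr => s _ do rewrite mxE std_rep_E mulrBr.
  by rewrite sumrB D_E.
split.
  move=> F0 i; rewrite sumrB.
  suff H : forall i : 'I_m.+2, i != ord_max -> \sum_b A i b - \sum_a A a i = 0.
    case: (eqVneq i ord_max) => [->|]; last exact: H.
    have tot : \sum_(i : 'I_m.+2) (\sum_b A i b - \sum_a A a i) = 0.
      by rewrite sumrB exchange_big subrr.
    by rewrite (bigD1 ord_max) //= [X in _ + X]big1 ?addr0 in tot => // j /H.
  move=> {}i ne.
  have i' : (i < m.+1)%N.
    by rewrite ltn_neqAle -ltnS ltn_ord andbT.
  have := F_E (Ordinal i') ord0.
  have -> : widen_ord (leqnSn _) (Ordinal i') = i by apply: val_inj.
  rewrite F0 mxE => /esym /eqP; rewrite mulf_eq0 pnatr_eq0.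
  have -> : widen_ord (leqnSn m.+1) ord0 = ord0 by apply: val_inj.
  by rewrite eqn0Ngt Nc_pos /= => /eqP.
move=> H; apply/matrixP => i j; rewrite F_E mxE.
by have := H (widen_ord (leqnSn _) i); rewrite sumrB => ->; rewrite mulr0.
Qed.
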